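(* Let $C_n(a,b)$ be a connected $2$-regular circulant digraph (so $\gcd(n,a,b)=1$). Let $l\ge 1$ and $0\le k\le l$ be integers, and suppose $la+k(b-a)=\omega n$ for some integer $\omega$. Then the number of primitive periodic orbits of $C_n(a,b)$ of length $l$ with $b$-count $k$ is $$|\mathcal{P}_{l,k}(C_n(a,b))|=\frac{n}{l}\sum_{m\mid \gcd(l,k,\omega)}\mu(m)\binom{l/m}{k/m},$$ where $\mu$ is the Möbius function.
   Context: Let $n\ge 2$ and $0<a<b<n$ be integers. The directed circulant graph $C_n(a,b)$ has vertex set $\mathbb{Z}_n$ and directed bonds $(v,v+a)$ and $(v,v+b)$ for each $v\in\mathbb{Z}_n$ (addition mod $n$); the bond $(v,v+s)$ has step size $s\in\{a,b\}$. It is (strongly) connected iff $\gcd(n,a,b)=1$. A path of length $l$ is a sequence of bonds $(e_1,\dots,e_l)$ where the terminus of $e_j$ is the origin of $e_{j+1}$; its $b$-count is the number of bonds of step size $b$ in it; its step sequence is the sequence of step sizes. A circuit is a path whose last terminus equals its first origin; a path of length $l$ and $b$-count $k$ is a circuit iff $n$ divides its transit distance $(l-k)a+kb$, and the winding number is the transit distance divided by $n$. A periodic orbit is an equivalence class of circuits under cyclic rotation $\sigma(e_1,\dots,e_l)=(e_2,\dots,e_l,e_1)$; length, $b$-count and winding number are well defined on orbits. For a circuit $c$, $c^r$ denotes the concatenation of $r$ copies of $c$. A periodic orbit $p$ is primitive if there is no circuit $c_0$ and integer $r>1$ with $p=[c_0^r]$. $\mathcal{P}_{l,k}(C_n(a,b))$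 denotes the set of primitive periodic orbits of length $l$ and $b$-count $k$. *)

(* Defs.v *)
From Stdlib Require Import ClassicalEpsilon.
From mathcomp Require Import all_boot all_order all_algebra.
Set Implicit Arguments. Unset Strict Implicit. Unset Printing Implicit Defensive.
Import GRing.Theory Num.Theory.

Definition pb (P : Prop) : bool :=
  if excluded_middle_informative P then true else false.

Section Circulant.
Variables (n a b : nat).

(* A bond is (v, v+s); it is determined by its origin v : 'Z_n and its step
   size s in {a,b}; we encode the step size by a boolean (true = b). A path is
   determined by its first origin and its step sequence. *)
Definition stepsz (x : bool) : nat := if x then b else a.

Definition transit (w : seq bool) : nat := sumn (map stepsz w).

Definition terminus (v : 'Z_n) (w : seq bool) : 'Z_n := (v + (transit w)%:R)%R.

Definition is_circuit (c : 'Z_n * seq bool) : Prop := terminus c.1 c.2 = c.1.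

Definition rotc (c : 'Z_n * seq bool) : 'Z_n * seq bool :=
  match c.2 with
  | [::] => c
  | x :: w => ((c.1 + (stepsz x)%:R)%R, rcons w x)
  end.

Definition in_orbit (d c : 'Z_n * seq bool) : Prop :=
  exists i : nat, iter i rotc c = d.

Definition cpow (c : 'Z_n * seq bool) (r : nat) : 'Z_n * seq bool :=
  (c.1, flatten (nseq r c.2)).

Definition primitive_orbit_of (c : 'Z_n * seq bool) : Prop :=
  ~ exists (c0 : 'Z_n * seq bool) (r : nat),
      1 < r /\ is_circuit c0 /\ in_orbit (cpow c0 r) c.

Variable l : nat.

Definition tseq (c : 'Z_n * l.-tuple bool) : 'Z_n * seq bool := (c.1, val c.2).

Definition orbit_set (c : 'Z_n * l.-tuple bool) : {set 'Z_n * l.-tuple bool} :=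
  [set d | pb (in_orbit (tseq d) (tseq c))].

Definition prim_orbits (k : nat) : {set {set 'Z_n * l.-tuple bool}} :=
  [set orbit_set c | c in [set c : 'Z_n * l.-tuple bool |
       pb (is_circuit (tseq c) /\ count id c.2 = k /\ primitive_orbit_of (tseq c))]].

End Circulant.

Definition moebius (m : nat) : int :=
  if m == 0 then 0%R
  else if all (fun p => logn p m == 1) (primes m) then ((-1) ^+ size (primes m))%R
  else 0%R.

(* Main.v *)
From Stdlib Require Import ClassicalEpsilon.
Require Import Defs.
From mathcomp Require Import all_boot all_order all_algebra.
From mathcomp Require Import zify ring.
Set Implicit Arguments. Unset Strict Implicit. Unset Printing Implicit Defensive.
Import GRing.Theory Num.Theory.

Section SeqLemmas.
Variable T : eqType.

Lemma comm_cat_flatten (x y : seq T) j :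
  x ++ y = y ++ x -> size x = j * size y -> x = flatten (nseq j y).
Proof.
elim: j x => [|j IH] x Hc Hs /=.
  by move: Hs; rewrite mul0n => /eqP; rewrite size_eq0 => /eqP.
have Hxy : take (size y) x = y.
  have := congr1 (take (size y)) Hc.
  by rewrite (take_size_cat x (erefl (size y))) takel_cat // Hs mulSn; lia.
have Ex : x = y ++ drop (size y) x by rewrite -{1}(cat_take_drop (size y) x) Hxy.
rewrite Ex; congr (_ ++ _); apply: IH.
  set z := drop (size y) x in Ex *.
  move: Hc; rewrite Ex -!catA => /(congr1 (drop (size y))).
  by rewrite !(drop_size_cat _ (erefl (size y))).
move: Hs; rewrite {1}Ex size_cat mulSn; lia.
Qed.

Lemma flatten_nseq_rcons (u : seq T) r :
  flatten (nseq r u) ++ u = u ++ flatten (nseq r u).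
Proof. by elim: r => [|r IH] /=; rewrite ?cats0 // -catA IH. Qed.

Lemma rot_flatten (u : seq T) r :
  rot (size u) (flatten (nseq r u)) = flatten (nseq r u).
Proof.
case: r => [|r] /=; first by rewrite rot_oversize.
by rewrite rot_size_cat flatten_nseq_rcons.
Qed.

Lemma take_flatten (u : seq T) r : 0 < r ->
  take (size u) (flatten (nseq r u)) = u.
Proof. by case: r => // r _ /=; rewrite take_size_cat. Qed.

Lemma size_flatten_nseq (u : seq T) r : size (flatten (nseq r u)) = r * size u.
Proof. by elim: r => //= r IH; rewrite size_cat IH mulSn. Qed.

Lemma count_flatten_nseq (P : pred T) (u : seq T) r :
  count P (flatten (nseq r u)) = r * count P u.
Proof. by elim: r => //= r IH; rewrite count_cat IH mulSn. Qed.

Lemma rot_period (w : seq T) p : 0 < p -> p %| size w -> rot p w = w ->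
  w = flatten (nseq (size w %/ p) (take p w)).
Proof.
move=> p0 pd Hr.
have [w0|wn] := eqVneq (size w) 0.
  by move/eqP: w0; rewrite size_eq0 => /eqP ->; rewrite div0n.
have pl : p <= size w by apply: dvdn_leq => //; lia.
have Hc : drop p w ++ take p w = take p w ++ drop p w by rewrite cat_take_drop; exact: Hr.
have sz : size (take p w) = p by rewrite size_take; case: ltnP => //; lia.
have := comm_cat_flatten Hc.
move: pd => /dvdnP [q Hq].
have q0 : 0 < q by move: wn; rewrite Hq; case: q {Hq} => //.
rewrite Hq mulnK // => /(_ q.-1).
rewrite size_drop sz Hq => H; rewrite -{1}(cat_take_drop p w) H; last by case: (q) q0 => // q' _; rewrite mulSn addKn.
by case: q q0 {Hq H} => // q _.
Qed.
End SeqLemmas.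

Section Circ.
Variables (n a b : nat).
Local Open Scope ring_scope.

Lemma transit_cat s1 s2 : transit a b (s1 ++ s2) = (transit a b s1 + transit a b s2)%N.
Proof. by rewrite /transit map_cat sumn_cat. Qed.

Lemma transit_flatten u r : transit a b (flatten (nseq r u)) = (r * transit a b u)%N.
Proof. by elim: r => //= r IH; rewrite transit_cat IH mulSn. Qed.

Lemma transit_count s :
  transit a b s = (count id s * b + (size s - count id s) * a)%N.
Proof.
elim: s => //= x s IH; rewrite /transit /= -/(transit a b s) IH.
have := count_size id s; case: x => /=; nia.
Qed.

Lemma iter_rotc (v : 'Z_n) s p : (p <= size s)%N ->
  iter p (rotc a b) (v, s) = (v + (transit a b (take p s))%:R, rot p s).
Proof.
elim: p => [|p IH] ps; first by rewrite take0 rot0 addr0.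
rewrite iterS IH; last by apply: ltnW.
rewrite /rotc /= /rot (drop_nth false ps) /= (take_nth false ps).
by rewrite rcons_cat -cats1 transit_cat natrD addrA /transit /= addn0.
Qed.
End Circ.

Section Orb.
Variables (T : finType) (f : T -> T).
Hypothesis finj : injective f.

Lemma iter_inj i : injective (iter i f).
Proof. by elim: i => // i IH x y /= /finj /IH. Qed.

Lemma iter_mul_order x q : iter (q * order f x) f x = x.
Proof. by elim: q => // q IH; rewrite mulSn iterD IH iter_order. Qed.

Lemma iter_fix_order x i : (iter i f x == x) = (order f x %| i).
Proof.
have o0 := order_gt0 f x.
apply/eqP/idP => [H|/dvdnP [q ->]]; last exact: iter_mul_order.
have : iter (i %% order f x) f x = x.
  by move: H; rewrite {1}(divn_eq i (order f x)) addnC iterD iter_mul_order.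
move=> H2; have := findex_iter (ltn_pmod i o0); rewrite H2.
rewrite /findex /orbit -orderSpred /= eqxx => H3.
by rewrite /dvdn -H3.
Qed.

Lemma iter_fix_shift x j i : iter i f (iter j f x) = iter j f x <-> iter i f x = x.
Proof.
rewrite -iterD addnC iterD; split; first exact: iter_inj.
by move=> ->.
Qed.

Lemma fconnect_iterP x y : reflect (exists i, iter i f x = y) (fconnect f x y).
Proof.
apply: (iffP idP) => [H|[i <-]]; last exact: fconnect_iter.
by exists (findex f x y); apply: iter_findex.
Qed.

Lemma order_iter x j : order f (iter j f x) = order f x.
Proof.
apply/eqP; rewrite eqn_dvd -!iter_fix_order.
apply/andP; split; apply/eqP; first by apply/(iter_fix_shift x j); rewrite iter_order.
by apply/(iter_fix_shift x j); apply: iter_order.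
Qed.
End Orb.

Section TLevel.
Variables (n a b l : nat).
Hypothesis n1 : (1 < n)%N.
Hypothesis l0 : (0 < l)%N.
Local Open Scope ring_scope.

Lemma zn_add_nat (v : 'Z_n) x : (v + x%:R = v) <-> (n %| x)%N.
Proof.
split.
  rewrite -{2}[v]addr0 => /addrI /(congr1 val) H.
  by rewrite /dvdn; apply/eqP; rewrite -(val_Zp_nat n1 x); exact: H.
by case/dvdnP => q ->; rewrite natrM pchar_Zp // mulr0 addr0.
Qed.

Definition Rt (c : 'Z_n * l.-tuple bool) : 'Z_n * l.-tuple bool :=
  (c.1 + (stepsz a b (head false c.2))%:R, rot_tuple 1 c.2).

Lemma tseqR c : tseq (Rt c) = rotc a b (tseq c).
Proof.
case: c => v [[|x w] Hs]; first by exfalso; move: l0; rewrite -(eqP Hs).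
by rewrite /Rt /tseq /rotc /= rot1_cons.
Qed.

Lemma tseq_inj : injective (@tseq n l).
Proof. by case=> v w [v' w'] [-> /val_inj ->]. Qed.

Lemma Rt_inj : injective Rt.
Proof.
case=> v w [v' w'] H; have /= H1 := congr1 fst H; have /= H2 := congr1 snd H.
have Ew : w = w' by apply/val_inj/(@rot_inj 1); exact: (congr1 val H2).
by subst w'; move: H1 => /addIr ->.
Qed.

Lemma tseq_iter i c : tseq (iter i Rt c) = iter i (rotc a b) (tseq c).
Proof. by elim: i => //= i IH; rewrite tseqR IH. Qed.

Lemma fixR c p : (p <= l)%N ->
  (iter p Rt c = c) <-> (rot p c.2 = c.2 /\ (n %| transit a b (take p c.2))%N).
Proof.
move=> pl; split.
  move/(congr1 (@tseq n l)); rewrite tseq_iter /tseq iter_rotc ?size_tuple //.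
  by case=> /zn_add_nat H1 H2.
case=> H1 /(zn_add_nat c.1) H2; apply: tseq_inj.
by rewrite tseq_iter /tseq iter_rotc ?size_tuple // H1 H2.
Qed.

Lemma circuitE (c : 'Z_n * l.-tuple bool) : is_circuit a b (tseq c) <-> (n %| transit a b c.2)%N.
Proof. exact: zn_add_nat. Qed.

Lemma iter_l (c : 'Z_n * l.-tuple bool) : is_circuit a b (tseq c) -> iter l Rt c = c.
Proof.
move/circuitE => H; apply/fixR => //.
by rewrite rot_oversize ?take_oversize ?size_tuple.
Qed.

Lemma order_dvd_l (c : 'Z_n * l.-tuple bool) : is_circuit a b (tseq c) -> (order Rt c %| l)%N.
Proof. by move/iter_l/eqP; rewrite iter_fix_order //; apply: Rt_inj. Qed.

Lemma prim_iff (c : 'Z_n * l.-tuple bool) : is_circuit a b (tseq c) ->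
  primitive_orbit_of a b (tseq c) <-> order Rt c = l.
Proof.
move=> Hc; have od := order_dvd_l Hc; have o0 := order_gt0 Rt c.
split.
  move=> Hp; case: (eqVneq (order Rt c) l) => // Hne; exfalso; apply: Hp.
  set o := order Rt c in od o0 Hne *.
  have ol : (o < l)%N by rewrite ltn_neqAle Hne dvdn_leq.
  have Hf : iter o Rt c = c by apply/eqP; rewrite iter_fix_order //; exact: Rt_inj.
  have [Hr Hd] := (fixR c (ltnW ol)).1 Hf.
  exists (c.1, take o c.2), (l %/ o)%N; split; [|split].
  - by rewrite ltn_divRL // mul1n.
  - exact/(zn_add_nat c.1).
  - exists 0%N; rewrite /cpow /tseq /=.
    have od' : (o %| size c.2)%N by rewrite size_tuple.
    by rewrite {1}(rot_period o0 od' Hr) size_tuple.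
move=> Ho [c0 [r [r1 [Hc0 [i Hi]]]]].
have Ht : tseq (iter i Rt c) = cpow c0 r by rewrite tseq_iter.
have E : val (iter i Rt c).2 = flatten (nseq r c0.2) := congr1 snd Ht.
have szl : l = (r * size c0.2)%N.
  by rewrite -size_flatten_nseq -E size_tuple.
have p0 : (0 < size c0.2)%N by move: l0; rewrite szl; case: (size c0.2) => //; rewrite muln0.
have pl : (size c0.2 < l)%N by rewrite szl -{1}[size c0.2]mul1n ltn_pmul2r.
have Hf' : iter (size c0.2) Rt (iter i Rt c) = iter i Rt c.
  apply/(fixR _ (ltnW pl)); rewrite E; split; first exact: rot_flatten.
  rewrite take_flatten; last by apply: ltn_trans r1.
  exact: ((zn_add_nat c0.1 _).1 Hc0).
have Hf : iter (size c0.2) Rt c = c := (iter_fix_shift Rt_inj c i _).1 Hf'.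
have : (order Rt c %| size c0.2)%N by rewrite -iter_fix_order ?Hf //; exact: Rt_inj.
by move/dvdn_leq => /(_ p0); rewrite Ho leqNgt pl.
Qed.

End TLevel.

Section Mob.
Local Open Scope ring_scope.

Lemma moebius1 : moebius 1 = 1.
Proof. by []. Qed.

Lemma primes_pM p d : prime p -> (0 < d)%N -> ~~ (p %| d)%N ->
  perm_eq (primes (p * d)) (p :: primes d).
Proof.
move=> pp d0 npd; apply: uniq_perm.
- exact: primes_uniq.
- by rewrite /= primes_uniq andbT mem_primes; apply/negP => /and3P [_ _ H]; rewrite H in npd.
- move=> q; rewrite (primesM q (prime_gt0 pp) d0) (primes_prime pp) !in_cons.
  by rewrite in_nil orbF.
Qed.

Lemma moebius_pM p d : prime p -> (0 < d)%N -> ~~ (p %| d)%N ->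
  moebius (p * d) = - moebius d.
Proof.
move=> pp d0 npd; have pd0 : (p * d != 0)%N by rewrite muln_eq0 negb_or -lt0n prime_gt0 // -lt0n d0.
have Hperm := primes_pM pp d0 npd.
rewrite /moebius (negPf pd0) (negPf (_ : d != 0%N)) -?lt0n //.
rewrite (perm_all _ Hperm) (perm_size Hperm) [all _ (p :: _)]/=.
have -> : logn p (p * d) = 1%N.
  by rewrite (lognM p (prime_gt0 pp) d0) (logn_prime p pp) eqxx (_ : logn p d = 0%N) //; apply/eqP; rewrite -leqn0 leqNgt logn_gt0 mem_primes; apply/negP => /and3P [_ _ H]; rewrite H in npd.
rewrite eqxx andTb.
rewrite (@eq_in_all _ _ (fun q => logn q d == 1%N)); last first.
  move=> q; rewrite mem_primes => /and3P [qp _ qd].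
  rewrite (lognM q (prime_gt0 pp) d0) (logn_prime q pp).
  suff -> : (q == p) = false by [].
  by apply/negbTE; apply: contraNneq npd => <-.
by case: ifP => _; rewrite ?oppr0 // [size (_ :: _)]/= exprS mulN1r.
Qed.

Lemma moebius_sq p d : prime p -> (0 < d)%N -> moebius (p * (p * d)) = 0.
Proof.
move=> pp d0.
have p0 := prime_gt0 pp.
rewrite /moebius; case: ifP => // _.
suff -> : all (fun q => logn q (p * (p * d)) == 1%N) (primes (p * (p * d))) = false by [].
apply/negbTE/allPn; exists p.
  by rewrite mem_primes pp !muln_gt0 p0 d0 dvdn_mulr.
by rewrite !lognM ?muln_gt0 ?p0 // logn_prime // eqxx; case: (logn p d).
Qed.

Lemma perm_div_filter N N' (P Q : pred nat) : (0 < N)%N -> (0 < N')%N ->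
  (forall m, (m %| N)%N && P m = (m %| N')%N && Q m) ->
  perm_eq (filter P (divisors N)) (filter Q (divisors N')).
Proof.
move=> N0 N'0 H; apply: uniq_perm; rewrite ?filter_uniq ?divisors_uniq //.
by move=> m; rewrite !mem_filter -!dvdn_divisors // andbC H andbC.
Qed.

Lemma moebius_sum N : (0 < N)%N ->
  \sum_(m <- divisors N) moebius m = (N == 1%N)%:R :> int.
Proof.
move=> N0; case: (ltngtP N 1) => [|N1|->]; last by rewrite big_seq1.
  by rewrite ltnS leqn0 => /eqP N00; move: N0; rewrite N00.
set p := pdiv N; have pp : prime p := pdiv_prime N1.
have pN : (p %| N)%N := pdiv_dvd N.
have p0 := prime_gt0 pp.
set M := (N %/ p)%N.
have NE : N = (p * M)%N by rewrite mulnC divnK.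
have M0 : (0 < M)%N by move: N0; rewrite NE muln_gt0 => /andP[].
rewrite (bigID (dvdn p)) /=.
rewrite -big_filter.
have Hperm : perm_eq [seq i <- divisors N | p %| i]%N (map (muln p) (divisors M)).
  apply: uniq_perm.
  - by rewrite filter_uniq ?divisors_uniq.
  - rewrite map_inj_uniq ?divisors_uniq // => x y /eqP; rewrite eqn_pmul2l // => /eqP.
    done.
  - move=> x; rewrite mem_filter -dvdn_divisors //; apply/idP/mapP.
      case/andP => /dvdnP [y ->] /=; rewrite NE mulnC dvdn_pmul2l // => yM.
      by exists y => //; rewrite -dvdn_divisors.
    case=> y; rewrite -dvdn_divisors // => yM ->.
    by rewrite dvdn_mulr // NE dvdn_pmul2l.
rewrite (perm_big _ Hperm) big_map.
rewrite (bigID (dvdn p)) /= big1_seq ?add0r; last first.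
  move=> d /andP [/dvdnP [e ->] dM]; rewrite (mulnC e p) moebius_sq //.
  move: dM; rewrite -dvdn_divisors //; case: e => //; rewrite mul0n dvd0n => /eqP H; by move: M0; rewrite H.
rewrite -[X in _ + X]big_filter (perm_big _ (perm_div_filter (Q := fun m => ~~ (p %| m)%N) N0 M0 _)); last first.
  move=> m; case: (boolP (p %| m)%N); rewrite ?andbF //.
  by move=> npm; rewrite !andbT NE Gauss_dvdr // coprime_sym prime_coprime.
rewrite big_filter [X in X + _]big_seq_cond [X in X + _](eq_bigr (fun i => - moebius i)).
  by rewrite sumrN -big_seq_cond addNr.
move=> d /andP [dM npd].
apply: moebius_pM => //.
by move: dM; rewrite -dvdn_divisors //; case: d npd => //; rewrite dvd0n => _ /eqP H; move: M0; rewrite H.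
Qed.

Lemma mob_inv l o : (0 < l)%N -> (o %| l)%N -> (0 < o)%N ->
  \sum_(m <- divisors l) (if (o %| l %/ m)%N then moebius m else 0) = (o == l)%:R :> int.
Proof.
move=> l0 ol o0.
have q0 : (0 < l %/ o)%N by rewrite divn_gt0 // dvdn_leq.
rewrite -big_mkcond -big_filter.
rewrite (perm_big _ (perm_div_filter (Q := predT) l0 q0 _)); last first.
  move=> m; rewrite andbT; case: (boolP (m %| l)%N) => ml /=.
    by rewrite !dvdn_divRL // mulnC.
  apply/esym/negbTE; apply: contra ml => H; apply: dvdn_trans H _; exact: dvdn_div.
rewrite filter_predT moebius_sum //.
suff -> : (l %/ o == 1)%N = (o == l) by [].
apply/idP/idP => /eqP H; apply/eqP; last by rewrite H divnn l0.
by rewrite -(divnK ol) H mul1n.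
Qed.
End Mob.

Lemma card_count_tuples p j :
  #|[set u : p.-tuple bool | count id u == j]| = 'C(p, j).
Proof.
pose f (A : {set 'I_p}) : p.-tuple bool := [tuple of map (fun i => i \in A) (ord_tuple p)].
have finj : injective f.
  move=> A B /(congr1 (fun t => tnth t)) H; apply/setP => i.
  by have := congr1 (fun g => g i) H; rewrite /f !tnth_map !tnth_ord_tuple.
have fc A : count id (f A) = #|A|.
  rewrite /f /= count_map cardE /enum_mem size_filter.
  by rewrite (@eq_filter _ _ predT) // filter_predT; apply: eq_count.
have -> : [set u : p.-tuple bool | count id u == j] = f @: [set A : {set 'I_p} | #|A| == j].
  apply/setP => u; rewrite inE; apply/idP/imsetP.
    move=> Hu; exists [set i | tnth u i].
      rewrite inE -fc; congr (_ == _): Hu; congr count.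
      congr val; apply: eq_from_tnth => i; by rewrite /f tnth_map tnth_ord_tuple inE.
    by apply: eq_from_tnth => i; rewrite /f tnth_map tnth_ord_tuple inE.
  by case=> A; rewrite inE => HA ->; rewrite fc.
by rewrite card_imset // card_draws card_ord.
Qed.

Section Main.
Variables (n a b l k w' : nat).
Hypothesis n1 : (1 < n)%N.
Hypothesis l0 : (0 < l)%N.
Hypothesis kl : (k <= l)%N.
Hypothesis Hw : (k * b + (l - k) * a = w' * n)%N.

Local Notation T := ('Z_n * l.-tuple bool)%type.
Local Notation R := (@Rt n a b l).

Lemma pbP (P : Prop) : reflect P (pb P).
Proof. by rewrite /pb; case: excluded_middle_informative => H; constructor. Qed.

Definition mkw m p (u : p.-tuple bool) : l.-tuple bool :=
  insubd (nseq_tuple l false) (flatten (nseq m (val u))).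

Lemma fix_card m : (m %| l)%N -> (0 < m)%N ->
  #|[set c : T | pb (is_circuit a b (tseq c)) && (count id c.2 == k) && (iter (l %/ m) R c == c)]|
  = if (m %| k)%N && (m %| w')%N then (n * 'C(l %/ m, k %/ m))%N else 0%N.
Proof.
move=> ml m0; set p := (l %/ m)%N.
have lE : l = (m * p)%N by rewrite /p mulnC divnK.
have p0 : (0 < p)%N by move: l0; rewrite lE muln_gt0 => /andP[].
have pl : (p <= l)%N by rewrite lE leq_pmull.
set W := [set w : l.-tuple bool | (rot p w == w) && (n %| transit a b (take p w))%N && (count id w == k)].
have wper (w : l.-tuple bool) : rot p w = w -> val w = flatten (nseq m (take p w)).
  move=> Hr; have sd : (p %| size w)%N by rewrite size_tuple {1}lE dvdn_mull.
  have lpm : (l %/ p = m)%N by rewrite {1}lE mulnK.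
  by have E := rot_period p0 sd Hr; rewrite size_tuple lpm in E.
have -> : [set c : T | pb (is_circuit a b (tseq c)) && (count id c.2 == k) && (iter p R c == c)]
    = setX [set: 'Z_n] W.
  apply/setP => [[v w]]; rewrite !inE /=.
  apply/idP/idP.
    case/andP => /andP [_ ->] /eqP /(fixR a b n1 l0 (v, w) pl) /= [Hr Hd].
    by rewrite Hr eqxx Hd.
  case/andP => /andP [/eqP Hr Hd] ->; rewrite andbT.
  have -> : iter p R (v, w) = (v, w) by apply/(fixR a b n1 l0 (v, w) pl).
  rewrite eqxx andbT; apply/pbP/(circuitE a b n1 (v, w)) => /=.
  by rewrite wper // transit_flatten dvdn_mull.
rewrite cardsX cardsT card_ord Zp_cast //.
case: ifP => cond.
  move: cond => /andP [mk mw].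
  set U := [set u : p.-tuple bool | count id u == (k %/ m)%N].
  have mkwE (u : p.-tuple bool) : val (mkw m u) = flatten (nseq m (val u)).
    by rewrite val_insubd size_flatten_nseq size_tuple -lE eqxx.
  have -> : W = (@mkw m p) @: U.
    apply/setP => w; rewrite inE; apply/idP/imsetP.
      case/andP => /andP [/eqP Hr Hd] /eqP Hc.
      set u := (insubd (nseq_tuple p false) (take p w) : p.-tuple bool).
      have uE : val u = take p w by rewrite val_insubd size_takel ?size_tuple // eqxx.
      exists u.
        rewrite inE uE; apply/eqP; have Hc' := Hc; rewrite (wper w Hr) count_flatten_nseq in Hc'.
        by rewrite -Hc' mulKn.
      by apply: val_inj; rewrite mkwE uE -wper.
    case=> u; rewrite inE => /eqP Hu ->.
    rewrite mkwE; have su : size u = p := size_tuple u.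
    have Hrot : rot p (flatten (nseq m (val u))) = flatten (nseq m (val u)).
      by have := rot_flatten (val u) m; rewrite su.
    have Htk : take p (flatten (nseq m (val u))) = val u.
      by have := take_flatten (val u) m0; rewrite su.
    rewrite Hrot Htk eqxx count_flatten_nseq Hu mulnC divnK // eqxx andbT /=.
    rewrite transit_count su Hu.
    move: mk mw => /dvdnP [k' kE] /dvdnP [w'' wE].
    have -> : (k %/ m = k')%N by rewrite kE mulnK.
    apply/dvdnP; exists w''; apply/eqP; rewrite -(eqn_pmul2l m0); apply/eqP.
    have k'p : (k' <= p)%N by move: kl; rewrite kE lE mulnC leq_pmul2l.
    have E1 : (l - k = m * (p - k'))%N by rewrite lE kE (mulnC k') mulnBr.
    have Hw' := Hw; rewrite E1 kE wE in Hw'.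
    set x := (p - k')%N in E1 Hw' *.
    nia.
  rewrite card_imset; first by rewrite card_count_tuples.
  move=> u1 u2 /(congr1 val); rewrite !mkwE => /(congr1 (take p)).
  have Htk (u : p.-tuple bool) : take p (flatten (nseq m (val u))) = val u.
    by have := take_flatten (val u) m0; rewrite size_tuple.
  by rewrite !Htk => H; apply: val_inj.
rewrite (_ : W = set0) ?cards0 ?muln0 //.
apply/setP => w; rewrite inE in_set0; apply/negbTE/negP => /andP [/andP [/eqP Hr Hd] /eqP Hc].
move: cond; rewrite -Hc {1}(wper w Hr) count_flatten_nseq dvdn_mulr //=.
have Ht : transit a b w = (w' * n)%N by rewrite transit_count size_tuple Hc.
move: Ht; rewrite (wper w Hr) transit_flatten; move: Hd => /dvdnP [j ->].
rewrite mulnA => /eqP; rewrite eqn_pmul2r ?(ltn_trans _ n1) // => /eqP <-.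
by rewrite dvdn_mulr.
Qed.

Definition Sc := [set c : T | pb (is_circuit a b (tseq c)) && (count id c.2 == k)].
Definition Pset := [set c : T | pb (is_circuit a b (tseq c) /\ count id c.2 = k /\ primitive_orbit_of a b (tseq c))].

Lemma count_iter (c : T) i : count id (iter i R c).2 = count id c.2.
Proof.
elim: i => //= i <-.
have H : perm_eq (rot 1 (val (iter i R c).2)) (val (iter i R c).2) by apply/permPl; exact: perm_rot.
by move/permP: H => ->.
Qed.

Lemma circ_fix (c : T) : is_circuit a b (tseq c) <-> iter l R c = c.
Proof.
split; first exact: (iter_l n1 l0).
move/(fixR a b n1 l0 c (leqnn l)) => [_]; rewrite take_oversize ?size_tuple // => H.
exact/(circuitE a b n1 c).
Qed.

Lemma circ_iter (c : T) i : is_circuit a b (tseq (iter i R c)) <-> is_circuit a b (tseq c).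
Proof. rewrite !circ_fix; exact: (iter_fix_shift (@Rt_inj n a b l)). Qed.

Lemma PE : Pset = [set c in Sc | order R c == l].
Proof.
apply/setP => c; rewrite !inE.
apply/pbP/andP => [[Hc [Hk Hp]]|[/andP [/pbP Hc /eqP Hk] /eqP Ho]].
  split; first by apply/andP; split; [apply/pbP | apply/eqP].
  by apply/eqP; apply/(prim_iff n1 l0 Hc).
by split; [|split] => //; apply/(prim_iff n1 l0 Hc).
Qed.

Lemma orbit_setE (c : T) : orbit_set a b c = [set d | fconnect R c d].
Proof.
apply/setP => d; rewrite !inE; apply/pbP/(fconnect_iterP R c d).
  by case=> i Hi; exists i; apply: tseq_inj; rewrite (tseq_iter a b l0).
by case=> i <-; exists i; rewrite (tseq_iter a b l0).
Qed.

Lemma P_closed (c d : T) : c \in Pset -> fconnect R c d -> d \in Pset.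
Proof.
rewrite PE !inE => /andP [/andP [/pbP Hc /eqP Hk] /eqP Ho] /(fconnect_iterP R c d) [i <-].
rewrite count_iter Hk eqxx (order_iter (@Rt_inj n a b l)) Ho eqxx !andbT.
by apply/pbP/circ_iter.
Qed.

Lemma card_P : (#|prim_orbits n a b l k| * l = #|Pset|)%N.
Proof.
have eqR : {in Pset & &, equivalence_rel (fun x y : T => fconnect R x y)}.
  move=> x y z _ _ _; split; first exact: connect0.
  move=> Hxy; apply/idP/idP => H; last exact: connect_trans Hxy H.
  apply: connect_trans H; rewrite fconnect_sym //; exact: Rt_inj.
have EP : prim_orbits n a b l k = equivalence_partition (fun x y : T => fconnect R x y) Pset.
  apply: eq_in_imset => c Hc; rewrite orbit_setE; apply/setP => d; rewrite !inE.
  case H: (fconnect R c d); rewrite ?andbF // andbT.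
  by have := P_closed Hc H; rewrite inE.
rewrite (card_partition (equivalence_partitionP eqR)) -EP -sum_nat_const.
apply: eq_bigr => A /imsetP [c Hc ->]; rewrite orbit_setE cardsE.
have Hc' : c \in Pset := Hc.
by move: Hc'; rewrite PE inE => /andP [_ /eqP].
Qed.

Local Open Scope ring_scope.
Lemma card_setI_sum (U : finType) (A : {set U}) (Q : pred U) :
  (#|[set c in A | Q c]|%:R : int) = \sum_(c in A) (Q c)%:R.
Proof.
rewrite -sum1_card natr_sum big_mkcond [RHS]big_mkcond; apply: eq_bigr => c _.
by rewrite !inE; case: (c \in A); case: (Q c).
Qed.

Lemma card_P_mob : (#|Pset|%:R : int) = \sum_(m <- divisors l) moebius m *
  (#|[set c : T | pb (is_circuit a b (tseq c)) && (count id c.2 == k) && (iter (l %/ m) R c == c)]|%:R).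
Proof.
rewrite PE card_setI_sum.
rewrite (eq_bigr (fun c => \sum_(m <- divisors l) (if (order R c %| l %/ m)%N then moebius m else 0))); last first.
  move=> c; rewrite inE => /andP [/pbP Hc _].
  by rewrite (mob_inv l0 (order_dvd_l n1 l0 Hc) (order_gt0 R c)).
rewrite exchange_big /=; apply: eq_bigr => m _.
have -> : [set c : T | pb (is_circuit a b (tseq c)) && (count id c.2 == k) && (iter (l %/ m) R c == c)]
   = [set c in Sc | iter (l %/ m) R c == c] by apply/setP => c; rewrite !inE.
rewrite card_setI_sum mulr_sumr; apply: eq_bigr => c _.
rewrite (iter_fix_order (@Rt_inj n a b l)).
by case: ifP; rewrite ?mulr1 ?mulr0.
Qed.

End Main.

Unset Implicit Arguments.
Set Strict Implicit.
Local Open Scope ring_scope.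


Theorem theorem1 (n a b l k : nat) (omega : int) :
  (1 < n)%N -> (0 < a)%N -> (a < b)%N -> (b < n)%N ->
  gcdn n (gcdn a b) = 1%N ->
  (1 <= l)%N -> (k <= l)%N ->
  (l%:Z * a%:Z + k%:Z * (b%:Z - a%:Z) = omega * n%:Z) ->
  (#|prim_orbits n a b l k|)%:R =
    (n%:R / l%:R : rat) *
    \sum_(m <- divisors (gcdn l (gcdn k `|omega|%N))) (moebius m)%:~R * ('C(l %/ m, k %/ m))%:R.
Proof.
move=> n1 a0 ab bn _ l1 kl Hom.
set w' := `|omega|%N.
have n0 : (0 < n)%N by apply: ltn_trans n1.
have om0 : 0 <= omega.
  rewrite -(pmulr_lge0 _ (_ : 0 < n%:Z)) ?ltz_nat // -Hom.
  apply: addr_ge0; first by rewrite -PoszM.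
  by apply: mulr_ge0 => //; rewrite subr_ge0 lez_nat ltnW.
have om : omega = w'%:Z by rewrite /w' gez0_abs.
have Hw : (k * b + (l - k) * a = w' * n)%N.
  apply/eqP; rewrite -eqz_nat !PoszD !PoszM -subzn // -om -Hom; apply/eqP; ring.
set g := gcdn l (gcdn k w').
have g0 : (0 < g)%N by rewrite gcdn_gt0 l1.
have Hint : (#|Pset n a b l k|%:R : int) =
    \sum_(m <- divisors g) moebius m * (n * 'C(l %/ m, k %/ m))%N%:R.
  rewrite (card_P_mob a b k n1 l1).
  rewrite (eq_big_seq (fun m => if (m %| k)%N && (m %| w')%N then moebius m * (n * 'C(l %/ m, k %/ m))%N%:R else 0)); last first.
    move=> m; rewrite -dvdn_divisors // => ml.
    have m0 : (0 < m)%N by apply: dvdn_gt0 ml.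
    rewrite (fix_card n1 l1 kl Hw ml m0).
    by case: ifP; rewrite ?mulr0.
  rewrite -big_mkcond -big_filter (perm_big _ (perm_div_filter (Q := predT) l1 g0 _)).
    by rewrite filter_predT.
  by move=> m; rewrite andbT !dvdn_gcd.
have E1 : (#|prim_orbits n a b l k|%:R : rat) * l%:R = #|Pset n a b l k|%:R.
  by rewrite -natrM (card_P a b k n1 l1).
have E2 : (#|Pset n a b l k|%:R : rat) =
    n%:R * \sum_(m <- divisors g) (moebius m)%:~R * ('C(l %/ m, k %/ m))%:R.
  have := congr1 (fun z : int => (z%:~R : rat)) Hint; rewrite /= rmorph_nat => ->.
  rewrite rmorph_sum mulr_sumr; apply: eq_bigr => m _.
  by rewrite rmorphM /= rmorph_nat natrM mulrCA.
have l0' : (l%:R : rat) != 0 by rewrite pnatr_eq0 -lt0n.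
rewrite -[LHS](mulfK l0') E1 E2 mulrAC.
by [].
Qed.
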